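(* Let $n\ge p\ge1$, $0<\varepsilon<1$, $\lambda>0$, $\tilde a>0$, and let $\mathrm{St}(p,n)^\varepsilon=\{X\in\mathbb{R}^{n\times p}:\|X^\top X-I_p\|\le\varepsilon\}$. For each $k\ge0$ let $\mathcal{A}_k$ be a map sending $(X_0,\dots,X_k)\in(\mathbb{R}^{n\times p})^{k+1}$ to a skew-symmetric matrix in $\mathbb{R}^{n\times n}$, such that $\|\mathcal{A}_k(X_0,\dots,X_k)X_k\|\le\tilde a$ whenever $X_0,\dots,X_k\in\mathrm{St}(p,n)^\varepsilon$. Let $X_0\in\mathrm{St}(p,n)^\varepsilon$ and define recursively $A_k=\mathcal{A}_k(X_0,\dots,X_k)$ and $X_{k+1}=X_k-\eta_k\big(A_kX_k+\lambda X_k(X_k^\top X_k-I_p)\big)$ with step sizes $\eta_k>0$. If $\eta_k\le\eta^*(\tilde a,\varepsilon,\lambda)$ for all $k$, then $X_k\in\mathrm{St}(p,n)^\varepsilon$ for all $k\ge0$.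
   Context: $\|\cdot\|$ is the Frobenius norm. $\eta^*(\tilde a,\varepsilon,\lambda)=\min\{Q(\lambda,\varepsilon,\tilde a),\frac1{2\lambda}\}$ with $Q(\lambda,\varepsilon,\tilde a)=\inf_{a\in(0,\tilde a],\,d\in(0,\varepsilon]}\frac{\lambda(1-\varepsilon)d+a\sqrt{(\varepsilon-d)/2}}{a^2+\lambda^2(1+\varepsilon)d^2}$. *)

(* Defs.v *)
From HB Require Import structures.
From mathcomp Require Import all_boot all_order all_algebra.
From mathcomp Require Import all_classical all_reals.
Set Implicit Arguments. Unset Strict Implicit. Unset Printing Implicit Defensive.
Import Order.TTheory GRing.Theory Num.Theory.
Local Open Scope ring_scope.
Local Open Scope classical_set_scope.

Definition frob (R : realType) (m n : nat) (A : 'M[R]_(m, n)) : R :=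
  Num.sqrt (\sum_(i < m) \sum_(j < n) A i j ^+ 2).

Definition St_eps (R : realType) (n p : nat) (eps : R) (X : 'M[R]_(n, p)) : Prop :=
  frob (X^T *m X - 1%:M) <= eps.

Definition Qfun (R : realType) (lambda eps at_ : R) : R :=
  inf [set q : R | exists a d : R,
         [/\ 0 < a, a <= at_, 0 < d, d <= eps &
          q = (lambda * (1 - eps) * d + a * Num.sqrt ((eps - d) / 2)) /
              (a ^+ 2 + lambda ^+ 2 * (1 + eps) * d ^+ 2)]].

Definition eta_star (R : realType) (at_ eps lambda : R) : R :=
  Num.min (Qfun lambda eps at_) (1 / (2 * lambda)).

(* Main.v *)
Require Import Defs.
From HB Require Import structures.
From mathcomp Require Import all_boot all_order all_algebra.
From mathcomp Require Import all_classical all_reals.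
From mathcomp Require Import ring lra.
Import Order.TTheory GRing.Theory Num.Theory.
Local Open Scope ring_scope.

Lemma CS (R : realType) (I : finType) (u v : I -> R) :
  (\sum_i u i * v i) ^+ 2 <= (\sum_i u i ^+ 2) * (\sum_i v i ^+ 2).
Proof.
set a := \sum_i u i ^+ 2; set b := \sum_i v i ^+ 2; set c := \sum_i u i * v i.
have b0 : 0 <= b by apply: sumr_ge0 => i _; exact: sqr_ge0.
have [bz|bp] := eqVneq b 0.
  have v0 : forall i, v i = 0.
    move=> i; apply/eqP; rewrite -sqrf_eq0; apply/eqP.
    by move/eqP: bz; rewrite psumr_eq0 => [/allP/(_ i (mem_index_enum i))/implyP/(_ isT)/eqP|j _]; [|exact: sqr_ge0].
  rewrite /c (eq_bigr (fun=> 0)) ?big1 // => [|i _]; last by rewrite v0 mulr0.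
  by rewrite expr0n /= mulr_ge0 //; apply: sumr_ge0 => i _; exact: sqr_ge0.
have bpos : 0 < b by rewrite lt_def bp b0.
have H : 0 <= \sum_i (b * u i - c * v i) ^+ 2 by apply: sumr_ge0 => i _; exact: sqr_ge0.
have E : \sum_i (b * u i - c * v i) ^+ 2 = b * (a * b - c ^+ 2).
  rewrite (eq_bigr (fun i => b^+2 * u i ^+ 2 - (2 * b * c) * (u i * v i) + c ^+ 2 * v i ^+ 2)); last by move=> i _; ring.
  rewrite big_split /= big_split /= sumrN -!mulr_sumr -/a -/b -/c; ring.
rewrite E in H; move: H; rewrite pmulr_rge0 // subr_ge0 mulrC //.
Qed.

Section Frob.
Local Set Implicit Arguments.
Variable R : realType.

Definition ip (m n : nat) (A B : 'M[R]_(m, n)) := \sum_i \sum_j A i j * B i j.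
Definition NN (m n : nat) (A : 'M[R]_(m, n)) := \sum_i \sum_j A i j ^+ 2.

Lemma NN_ge0 m n (A : 'M[R]_(m, n)) : 0 <= NN A.
Proof. by apply: sumr_ge0 => i _; apply: sumr_ge0 => j _; exact: sqr_ge0. Qed.

Lemma NN_ip m n (A : 'M[R]_(m, n)) : NN A = ip A A.
Proof. by apply: eq_bigr => i _; apply: eq_bigr => j _; rewrite expr2. Qed.

Lemma frob_ge0 m n (A : 'M[R]_(m, n)) : 0 <= frob A.
Proof. exact: sqrtr_ge0. Qed.

Lemma frob_sqr m n (A : 'M[R]_(m, n)) : frob A ^+ 2 = NN A.
Proof. by rewrite /frob sqr_sqrtr //; exact: NN_ge0. Qed.

Lemma ipC m n (A B : 'M[R]_(m, n)) : ip A B = ip B A.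
Proof. by apply: eq_bigr => i _; apply: eq_bigr => j _; rewrite mulrC. Qed.

Lemma ipDl m n (A B C : 'M[R]_(m, n)) : ip (A + B) C = ip A C + ip B C.
Proof.
rewrite /ip -big_split /=; apply: eq_bigr => i _; rewrite -big_split /=.
by apply: eq_bigr => j _; rewrite !mxE mulrDl.
Qed.

Lemma ipZl m n k (A C : 'M[R]_(m, n)) : ip (k *: A) C = k * ip A C.
Proof.
rewrite /ip mulr_sumr; apply: eq_bigr => i _; rewrite mulr_sumr.
by apply: eq_bigr => j _; rewrite !mxE mulrA.
Qed.

Lemma ipDr m n (A B C : 'M[R]_(m, n)) : ip C (A + B) = ip C A + ip C B.
Proof. by rewrite ipC ipDl !(ipC C). Qed.

Lemma ipZr m n k (A C : 'M[R]_(m, n)) : ip C (k *: A) = k * ip C A.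
Proof. by rewrite ipC ipZl ipC. Qed.

Lemma ip_pair m n (A B : 'M[R]_(m, n)) :
  ip A B = \sum_(q : 'I_m * 'I_n) A q.1 q.2 * B q.1 q.2.
Proof. by rewrite /ip pair_bigA. Qed.

Lemma ip_CS m n (A B : 'M[R]_(m, n)) : ip A B ^+ 2 <= NN A * NN B.
Proof.
rewrite ip_pair /NN !pair_bigA; exact: CS.
Qed.

Lemma ip_le m n (A B : 'M[R]_(m, n)) :
  - (frob A * frob B) <= ip A B <= frob A * frob B.
Proof.
have h := ip_CS A B; rewrite -!frob_sqr in h.
have ha := frob_ge0 A; have hb := frob_ge0 B.
move: h; rewrite -exprMn; have := mulr_ge0 ha hb.
move: (frob A * frob B) (ip A B) => P x hP h.
apply/andP; split; nra.
Qed.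

Lemma NND m n (A B : 'M[R]_(m, n)) : NN (A + B) = NN A + 2 * ip A B + NN B.
Proof. rewrite !NN_ip ipDl !ipDr (ipC B A); ring. Qed.

Lemma NNZ m n k (A : 'M[R]_(m, n)) : NN (k *: A) = k ^+ 2 * NN A.
Proof. rewrite !NN_ip ipZl ipZr; ring. Qed.

Lemma frobD m n (A B : 'M[R]_(m, n)) : frob (A + B) <= frob A + frob B.
Proof.
have ha := frob_ge0 A; have hb := frob_ge0 B; have hab := frob_ge0 (A + B).
have h := ip_le A B.
have e : frob (A + B) ^+ 2 <= (frob A + frob B) ^+ 2.
  rewrite frob_sqr NND -!frob_sqr; move/andP: h => [_ h]; nra.
nra.
Qed.

Lemma frobZ m n k (A : 'M[R]_(m, n)) : frob (k *: A) = `|k| * frob A.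
Proof. by rewrite [LHS]/frob -[\sum_i _]/(NN _) [frob A]/frob -[\sum_i _]/(NN _) NNZ sqrtrM ?sqr_ge0 // sqrtr_sqr. Qed.

Lemma NN_tr m n (A : 'M[R]_(m, n)) : NN A^T = NN A.
Proof. by rewrite /NN exchange_big; apply: eq_bigr => i _; apply: eq_bigr => j _; rewrite mxE. Qed.

Lemma frob_tr m n (A : 'M[R]_(m, n)) : frob A^T = frob A.
Proof. by rewrite [LHS]/frob -[\sum_i _]/(NN _) NN_tr. Qed.

Lemma NNM m n k (A : 'M[R]_(m, n)) (B : 'M[R]_(n, k)) : NN (A *m B) <= NN A * NN B.
Proof.
rewrite /NN mulr_suml; apply: ler_sum => i _.
rewrite [X in _ <= _ * X]exchange_big /= mulr_sumr; apply: ler_sum => j _.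
rewrite mxE; exact: CS.
Qed.

Lemma frobE m n (A : 'M[R]_(m, n)) : frob A = Num.sqrt (NN A).
Proof. by []. Qed.

Lemma frobM m n k (A : 'M[R]_(m, n)) (B : 'M[R]_(n, k)) : frob (A *m B) <= frob A * frob B.
Proof. by rewrite !frobE -sqrtrM ?NN_ge0 // ler_sqrt ?mulr_ge0 ?NN_ge0 // NNM. Qed.

Lemma ip_tr m n (A B : 'M[R]_(m, n)) : ip A B = \tr (A^T *m B).
Proof.
rewrite /mxtrace /ip exchange_big; apply: eq_bigr => j _; rewrite mxE.
by apply: eq_bigr => i _; rewrite mxE.
Qed.

Lemma eq_ler (x y : R) : x = y -> x <= y. Proof. by move->. Qed.

Lemma final_ineq (d eps lambda eta at_ a : R) :
  0 <= d -> d <= eps -> eps < 1 -> 0 < eps -> 0 < eta -> 0 < lambda ->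
  0 <= a -> a <= at_ -> eta * lambda <= 1/2 ->
  eta * (at_ ^+ 2 + lambda ^+ 2 * (1 + eps) * eps ^+ 2) <= lambda * (1 - eps) * eps ->
  d * (1 - 2 * (eta * lambda) + 2 * (eta * lambda) * d)
   + eta ^+ 2 * (a ^+ 2 + lambda ^+ 2 * (d ^+ 2 + d ^+ 3)) <= eps.
Proof.
move=> d0 de e1 e0 et0 l0 a0 aa tl H.
set t := eta * lambda.
have t0 : 0 < t by rewrite mulr_gt0.
have tl2 : t <= 1/2 by [].
have tdef : t = eta * lambda by [].
clearbody t.
have h1 : d * (1 - 2 * t) <= eps * (1 - 2 * t).
  apply: ler_wpM2r => //. lra.
have h2 : d ^+ 2 <= eps ^+ 2 by rewrite lerXn2r // nnegrE; lra.
have h3 : d ^+ 3 <= eps ^+ 3 by rewrite lerXn2r // nnegrE; lra.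
have h4 : a ^+ 2 <= at_ ^+ 2 by rewrite lerXn2r // nnegrE; lra.
have h5 : eta ^+ 2 * (at_ ^+ 2 + lambda ^+ 2 * (1 + eps) * eps ^+ 2) <= t * (1 - eps) * eps.
  have := ler_wpM2l (ltW et0) H => h; apply: le_trans (le_trans _ h) _; apply: eq_ler; rewrite ?tdef; ring.
have e3 : eps ^+ 3 = eps * eps ^+ 2 by rewrite exprS.
have h6 : 0 <= eta ^+ 2 * lambda ^+ 2 by rewrite mulr_ge0 // sqr_ge0.
have h7 : 0 <= t * (1 - eps) * eps by rewrite !mulr_ge0 //; lra.
have h8 : 2 * t * d ^+ 2 <= 2 * t * eps ^+ 2 by apply: ler_wpM2l => //; lra.
have h9 : eta ^+ 2 * lambda ^+ 2 * (d ^+ 2 + d ^+ 3) <= eta ^+ 2 * lambda ^+ 2 * (eps ^+ 2 + eps ^+ 3)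
  by apply: ler_wpM2l => //; lra.
have h10 : eta ^+ 2 * a ^+ 2 <= eta ^+ 2 * at_ ^+ 2 by apply: ler_wpM2l => //; exact: sqr_ge0.
have hd : d * (1 - 2 * t + 2 * t * d) = d * (1 - 2 * t) + 2 * t * d ^+ 2 by ring.
rewrite hd mulrDr mulrA.
have : eta ^+ 2 * at_ ^+ 2 + eta ^+ 2 * lambda ^+ 2 * (eps ^+ 2 + eps ^+ 3) <= t * (1 - eps) * eps.
  apply: le_trans h5; rewrite e3; apply: eq_ler; ring.
nra.
Qed.
Lemma sq_le (x y : R) : 0 <= x -> 0 <= y -> x ^+ 2 <= y ^+ 2 -> x <= y.
Proof. move=> hx hy h; nra. Qed.
Lemma NNB m n (A B : 'M[R]_(m, n)) : NN (A - B) = NN A - 2 * ip A B + NN B.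
Proof. by rewrite -scaleN1r NND NNZ ipZr; rewrite expr2; ring. Qed.

Lemma step (n p : nat) (eps lambda eta at_ : R) (A : 'M[R]_n) (X : 'M[R]_(n, p)) :
  0 < eps -> eps < 1 -> 0 < lambda -> 0 < eta -> eta * lambda <= 1/2 ->
  eta * (at_ ^+ 2 + lambda ^+ 2 * (1 + eps) * eps ^+ 2) <= lambda * (1 - eps) * eps ->
  A^T = - A -> frob (A *m X) <= at_ -> frob (X^T *m X - 1%:M) <= eps ->
  frob ((X - eta *: (A *m X + lambda *: (X *m (X^T *m X - 1%:M))))^T
        *m (X - eta *: (A *m X + lambda *: (X *m (X^T *m X - 1%:M)))) - 1%:M) <= eps.
Proof.
move=> e0 e1 l0 et0 tl H skA hA hM.
set M := X^T *m X - 1%:M.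
have hMe : frob M <= eps := hM.
set G := A *m X + lambda *: (X *m M).
set S := X^T *m (A *m X).
have hXX : X^T *m X = M + 1%:M by rewrite /M subrK.
have MT : M^T = M by rewrite /M linearB /= trmx_mul trmxK trmx1.
have ST : S^T = - S by rewrite /S !trmx_mul trmxK skA mulmxN mulNmx mulmxA.
have hXG : X^T *m G = S + lambda *: (M + M *m M).
  by rewrite /G mulmxDr -scalemxAr [X^T *m (X *m M)]mulmxA hXX mulmxDl mul1mx [M *m M + M]addrC.
have hGX : G^T *m X = - S + lambda *: (M + M *m M).
  by rewrite -[G^T *m X]trmxK trmx_mul trmxK hXG linearD /= ST linearZ /= linearD /= trmx_mul MT.
have hG : G = A *m X + lambda *: (X *m M) by [].
have hS : S = X^T *m (A *m X) by [].
clearbody G S M.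
set t := eta * lambda.
have hT : (X - eta *: G)^T = X^T - eta *: G^T by apply/matrixP => i j; rewrite !mxE.
have hM' : (X - eta *: G)^T *m (X - eta *: G) - 1%:M
   = ((1 - 2 * t) *: M - (2 * t) *: (M *m M)) + eta ^+ 2 *: (G^T *m G).
  rewrite hT mulmxBl !mulmxBr -!scalemxAl -!scalemxAr hXX hXG hGX scalerA.
  rewrite /t; move: (M *m M) (G^T *m G) => MM GG.
  apply/matrixP => i j; rewrite !mxE; ring.
rewrite hM'.
apply: le_trans (frobD _ _) _.
set d := frob M. set e := frob (M *m M). set j := ip M (M *m M).
set a := frob (A *m X).
have d0 : 0 <= d := frob_ge0 M.
have e0' : 0 <= e := frob_ge0 _.
have a0 : 0 <= a := frob_ge0 _.
have ed : e <= d * d := frobM _ _.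
have /andP[jl ju] : - (d * e) <= j <= d * e := ip_le _ _.
have t0 : 0 < t by rewrite mulr_gt0.
have tl2 : t <= 1/2 by [].
have de : d <= eps := hMe.
have hF : frob ((1 - 2 * t) *: M - (2 * t) *: (M *m M)) <= d * (1 - 2 * t + 2 * t * d).
  apply: sq_le; [exact: frob_ge0| rewrite mulr_ge0 //; nra |].
  rewrite frob_sqr NNB !NNZ ipZl ipZr -!frob_sqr -/d -/e -/j.
  have h1 : 0 <= (1 - 2 * t) * (2 * t) * (j + d * e) by rewrite !mulr_ge0 //; lra.
  have h2 : (1 - 2 * t) * (2 * t) * (d * e) <= (1 - 2 * t) * (2 * t) * (d * (d * d)).
    by apply: ler_wpM2l; [rewrite mulr_ge0 //; lra| apply: ler_wpM2l].
  have h3 : e ^+ 2 <= (d * d) ^+ 2 by rewrite lerXn2r // nnegrE mulr_ge0.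
  have h4 : (2 * t) ^+ 2 * e ^+ 2 <= (2 * t) ^+ 2 * (d * d) ^+ 2.
    by apply: ler_wpM2l => //; exact: sqr_ge0.
  nra.
have htrSM : \tr (S *m M) = 0.
  have : \tr (S *m M) = - \tr (S *m M).
    by rewrite -[in LHS]mxtrace_tr trmx_mul MT ST mulmxN raddfN /= mxtrace_mulC.
  lra.
have ip0 : ip (A *m X) (X *m M) = 0.
  rewrite ip_tr.
  have -> : (A *m X)^T *m (X *m M) = - (S *m M).
    by rewrite hS trmx_mul skA mulmxN mulNmx !mulmxA.
  by rewrite raddfN /= htrSM oppr0.
have NXM : NN (X *m M) = d ^+ 2 + j.
  rewrite NN_ip ip_tr frob_sqr NN_ip /j !ip_tr MT trmx_mul MT mulmxA -[M *m X^T *m X]mulmxA hXX.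
  by rewrite mulmxDr mulmx1 mulmxDl mxtraceD addrC mulmxA.
have hGG : frob (eta ^+ 2 *: (G^T *m G)) <= eta ^+ 2 * (a ^+ 2 + lambda ^+ 2 * (d ^+ 2 + d ^+ 3)).
  rewrite frobZ ger0_norm ?sqr_ge0 //; apply: ler_wpM2l; first exact: sqr_ge0.
  apply: le_trans (frobM _ _) _; rewrite frob_tr -expr2 frob_sqr hG NND NNZ ipZr ip0 NXM -frob_sqr -/a.
  have h5 : lambda ^+ 2 * j <= lambda ^+ 2 * (d ^+ 3).
    apply: ler_wpM2l; first exact: sqr_ge0.
    apply: le_trans ju _; rewrite exprS; apply: ler_wpM2l => //; by rewrite expr2.
  lra.
apply: le_trans (lerD hF hGG) _.
have aa : a <= at_ := hA.
rewrite /t; exact: (@final_ineq d eps lambda eta at_ a d0 de e1 e0 et0 l0 a0 aa tl H).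
Qed.
End Frob.

Section QF.
Local Open Scope classical_set_scope.
Lemma Qfun_le (R : realType) (lambda eps at_ : R) :
  0 < eps -> eps < 1 -> 0 < lambda -> 0 < at_ ->
  Qfun lambda eps at_ <= lambda * (1 - eps) * eps / (at_ ^+ 2 + lambda ^+ 2 * (1 + eps) * eps ^+ 2).
Proof.
move=> e0 e1 l0 a0.
have Hmem : [set q : R | exists a d : R,
         [/\ 0 < a, a <= at_, 0 < d, d <= eps &
          q = (lambda * (1 - eps) * d + a * Num.sqrt ((eps - d) / 2)) /
              (a ^+ 2 + lambda ^+ 2 * (1 + eps) * d ^+ 2)]]
   (lambda * (1 - eps) * eps / (at_ ^+ 2 + lambda ^+ 2 * (1 + eps) * eps ^+ 2)).
  exists at_, eps; split => //; by rewrite subrr mul0r sqrtr0 mulr0 addr0.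
apply: ge_inf => //.
exists 0 => q [a [d [ha _ hd _ ->]]].
apply: divr_ge0.
  apply: addr_ge0; last by rewrite mulr_ge0 ?sqrtr_ge0 // ltW.
  by apply: mulr_ge0; [apply: mulr_ge0|]; lra.
apply: addr_ge0; first exact: sqr_ge0.
by apply: mulr_ge0; [apply: mulr_ge0; [exact: sqr_ge0|lra]|exact: sqr_ge0].
Qed.

End QF.

Theorem proposition5 (R : realType) (n p : nat) (eps lambda at_ : R)
    (Acal : forall k : nat, ('I_k.+1 -> 'M[R]_(n, p)) -> 'M[R]_n)
    (X : nat -> 'M[R]_(n, p)) (eta : nat -> R) :
  (1 <= p)%N -> (p <= n)%N ->
  0 < eps -> eps < 1 -> 0 < lambda -> 0 < at_ ->
  (forall k (Xs : 'I_k.+1 -> 'M[R]_(n, p)), (Acal k Xs)^T = - Acal k Xs) ->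
  (forall k (Xs : 'I_k.+1 -> 'M[R]_(n, p)),
      (forall i, St_eps eps (Xs i)) -> frob (Acal k Xs *m Xs ord_max) <= at_) ->
  St_eps eps (X 0%N) ->
  (forall k, X k.+1 = X k - eta k *: (Acal k (fun i : 'I_k.+1 => X i) *m X k
                          + lambda *: (X k *m ((X k)^T *m X k - 1%:M)))) ->
  (forall k, 0 < eta k) ->
  (forall k, eta k <= eta_star at_ eps lambda) ->
  forall k, St_eps eps (X k).
Proof.
move=> _ _ e0 e1 l0 a0 skew bnd X0 rec etap etal.
have hQ := @Qfun_le _ _ _ _ e0 e1 l0 a0.
have den0 : 0 < at_ ^+ 2 + lambda ^+ 2 * (1 + eps) * eps ^+ 2.
  apply: ltr_wpDr; last by rewrite exprn_gt0.
  by rewrite !mulr_ge0 ?sqr_ge0 //; lra.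
have Hk : forall k, eta k * lambda <= 1/2 /\
   eta k * (at_ ^+ 2 + lambda ^+ 2 * (1 + eps) * eps ^+ 2) <= lambda * (1 - eps) * eps.
  move=> k; have := etal k; rewrite /eta_star le_min => /andP[h1 h2]; split.
    by move: h2; rewrite ler_pdivlMr ?mulr_gt0 // => h; lra.
  by move: (le_trans h1 hQ); rewrite ler_pdivlMr // mulrC.
suff H : forall k i, (i <= k)%N -> St_eps eps (X i) by move=> k; exact: (H k k).
elim=> [|k IH] i.
  by rewrite leqn0 => /eqP ->.
rewrite leq_eqVlt ltnS => /orP[/eqP ->|]; last exact: IH.
rewrite rec; have [h1 h2] := Hk k.
apply: (@step _ n p eps lambda (eta k) at_) => //; last exact: IH.
exact: (bnd k (fun i : 'I_k.+1 => X i) (fun i => IH i (ltn_ord i))).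
Qed.
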